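(* Let $k\ge3$ be an integer and let $I=(a_1,\dots,a_n)\in(0,1]^n$ with $n\le k$ and $\sum_{i=1}^n a_i\le1$. Then $w_2(I):=\sum_{i=1}^n w_2(a_i)\le\lambda_k-\frac1k$.
   Context: Define $\pi_1=2$, $\pi_{i+1}=\pi_i(\pi_i-1)+1$ for $i\ge1$, and $\lambda_j=\sum_{i=1}^j\max\{\frac{1}{\pi_i-1},\frac1j\}$ for $j\ge1$. For fixed $k$, the weight function $w_2:(0,1]\to\mathbb{R}$ is $w_2(x)=1-\frac1k$ for $x\in(\frac12,1]$; $w_2(x)=\frac1j$ for $x\in(\frac{1}{j+1},\frac1j]$, $j=2,\dots,k-1$; and $w_2(x)=\frac1k$ for $x\in(0,\frac1k]$. *)

(* Defs.v *)
From Stdlib Require Import Reals Lra List.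
Import ListNotations.
Open Scope R_scope.

(* Sylvester sequence, 0-indexed: sylv0 i = pi_(i+1).
   pi_1 = 2, pi_(i+1) = pi_i (pi_i - 1) + 1. *)
Fixpoint sylv0 (i : nat) : R :=
  match i with
  | O => 2
  | S i' => sylv0 i' * (sylv0 i' - 1) + 1
  end.

(* pi_i for i >= 1 (pi_0 is never used). *)
Definition pi_ (i : nat) : R := sylv0 (i - 1).

Definition lambda (j : nat) : R :=
  fold_right Rplus 0
    (map (fun i => Rmax (1 / (pi_ i - 1)) (1 / INR j)) (seq 1 j)).

Definition w2 (k : nat) (x : R) : R :=
  if Rlt_dec (1/2) x then 1 - 1 / INR k
  else if Rle_dec x (1 / INR k) then 1 / INR k
  else 1 / IZR (Int_part (1 / x)).

Definition sumR (l : list R) : R := fold_right Rplus 0 l.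

(* Main.v *)
Require Import Defs.
From Stdlib Require Import Reals List Lra Lia Psatz ZArith Classical.
Import ListNotations.
Open Scope R_scope.

Lemma ip_bounds x : 0 < x ->
  IZR (Int_part (1/x)) * x <= 1 /\ 1 < (IZR (Int_part (1/x)) + 1) * x.
Proof.
  intros Hx. destruct (base_Int_part (1/x)) as [H1 H2].
  set (J := IZR (Int_part (1/x))) in *.
  assert (E : (1/x) * x = 1) by (field; lra).
  split; nra.
Qed.

Lemma w2_small k x : (3 <= k)%nat -> 0 < x -> x <= 1 / INR k -> w2 k x = 1 / INR k.
Proof.
  intros Hk Hx Hs. assert (HK : 3 <= INR k) by (replace 3 with (INR 3) by (simpl; lra); apply le_INR; lia).
  assert (1 / INR k <= 1/3) by (unfold Rdiv; rewrite !Rmult_1_l; apply Rinv_le_contravar; lra).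
  unfold w2. destruct (Rlt_dec (1/2) x); [lra|]. destruct (Rle_dec x (1 / INR k)); lra.
Qed.

Lemma w2_mid k x : 1 / INR k < x -> x <= 1/2 -> w2 k x = 1 / IZR (Int_part (1/x)).
Proof.
  intros H1 H2. unfold w2. destruct (Rlt_dec (1/2) x); [lra|]. destruct (Rle_dec x (1 / INR k)); lra.
Qed.

Lemma w2_big k x : 1/2 < x -> w2 k x = 1 - 1 / INR k.
Proof. intros H. unfold w2. destruct (Rlt_dec (1/2) x); lra. Qed.

Lemma INRk3 k : (3 <= k)%nat -> 3 <= INR k.
Proof. intros. replace 3 with (INR 3) by (simpl; lra); apply le_INR; lia. Qed.

Lemma mid_facts k x : (3 <= k)%nat -> 1 / INR k < x -> x <= 1/2 ->
  let j := Int_part (1/x) in (2 <= j)%Z /\ (j + 1 <= Z.of_nat k)%Z.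
Proof.
  intros Hk H1 H2 j. pose proof (INRk3 k Hk) as HK.
  destruct (ip_bounds x) as [A B]; [assert (0 < 1/INR k) by (apply Rdiv_lt_0_compat; lra); lra|].
  fold j in A, B.
  assert (Kx : 1 < INR k * x).
  { assert (INR k * (1/INR k) = 1) by (field; lra). nra. }
  split.
  - assert (2 < IZR j + 1) by nra. assert (IZR 1 < IZR j) by lra. apply lt_IZR in H0. lia.
  - assert (IZR j < INR k) by nra. rewrite INR_IZR_INZ in H. apply lt_IZR in H. lia.
Qed.

Lemma w2_ge k x : (3 <= k)%nat -> 0 < x -> x <= 1/2 -> 1 / INR k <= w2 k x.
Proof.
  intros Hk Hx H2. pose proof (INRk3 k Hk).
  destruct (Rle_dec x (1/INR k)).
  - rewrite w2_small; auto; lra.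
  - rewrite w2_mid; try lra. destruct (mid_facts k x Hk) as [A B]; try lra.
    apply IZR_le in A. apply IZR_le in B. rewrite plus_IZR, <- INR_IZR_INZ in B.
    set (J := IZR (Int_part (1/x))) in *.
    unfold Rdiv; rewrite !Rmult_1_l. apply Rinv_le_contravar; simpl in *; lra.
Qed.

Lemma factU k x (q : Z) : (3 <= k)%nat -> 0 < x -> x <= 1/2 -> (1 <= q)%Z -> IZR q * x <= 1 ->
  w2 k x <= Rmax (1 / IZR q) (1 / INR k).
Proof.
  intros Hk Hx H2 Hq Hqx. pose proof (INRk3 k Hk).
  destruct (Rle_dec x (1/INR k)).
  - rewrite w2_small; try apply Rmax_r; auto; lra.
  - rewrite w2_mid; try lra. eapply Rle_trans; [|apply Rmax_l].
    destruct (ip_bounds x Hx) as [A B].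
    set (j := Int_part (1/x)) in *.
    assert (IZR q < IZR j + 1) by nra.
    rewrite <- plus_IZR in H0. apply lt_IZR in H0.
    assert (IZR q <= IZR j) by (apply IZR_le; lia).
    apply IZR_le in Hq.
    unfold Rdiv; rewrite !Rmult_1_l. apply Rinv_le_contravar; simpl in *; lra.
Qed.

Lemma factV k x (q : Z) : (3 <= k)%nat -> 0 < x -> x <= 1/2 -> (1 <= q)%Z -> IZR q * x <= 1 ->
  1 / INR k < w2 k x -> w2 k x * IZR q <= (IZR q + 1) * x.
Proof.
  intros Hk Hx H2 Hq Hqx Hw. pose proof (INRk3 k Hk).
  destruct (Rle_dec x (1/INR k)).
  - rewrite w2_small in Hw; auto; lra.
  - rewrite w2_mid; try lra.
    destruct (ip_bounds x Hx) as [A B].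
    set (j := Int_part (1/x)) in *.
    assert (IZR q < IZR j + 1) by nra.
    rewrite <- plus_IZR in H0. apply lt_IZR in H0.
    assert (IZR q <= IZR j) by (apply IZR_le; lia).
    apply IZR_le in Hq. simpl in Hq.
    set (J := IZR j) in *. set (Q := IZR q) in *.
    assert (HJ : 0 < J) by lra.
    replace (1 / J * Q) with (Q / J) by (field; lra).
    apply (Rmult_le_reg_r J); [lra|].
    replace (Q / J * J) with Q by (field; lra).
    nra.
Qed.

Lemma factB k x : (3 <= k)%nat -> 0 < x -> x <= 1/2 ->
  w2 k x - 1 / INR k <= (3/2 - 3 / INR k) * x.
Proof.
  intros Hk Hx H2. pose proof (INRk3 k Hk) as HK.
  assert (0 <= 3/2 - 3/INR k).
  { assert (3 / INR k <= 1) by (apply (Rmult_le_reg_r (INR k)); [lra|]; field_simplify; lra). lra. }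
  destruct (Rle_dec x (1/INR k)).
  - rewrite w2_small; auto. nra.
  - rewrite w2_mid; try lra. destruct (mid_facts k x Hk) as [A B]; try lra.
    destruct (ip_bounds x Hx) as [C D].
    set (j := Int_part (1/x)) in *.
    apply IZR_le in A. apply IZR_le in B. rewrite plus_IZR, <- INR_IZR_INZ in B.
    set (J := IZR j) in *. set (Kr := INR k) in *. simpl in A.
    assert (E : (3/2 - 3/Kr) / (J+1) - (1/J - 1/Kr) = (J-2)*(Kr/2 + J) / (J*Kr*(J+1))) by (field; lra).
    assert (0 <= (J-2)*(Kr/2 + J) / (J*Kr*(J+1))).
    { apply Rle_mult_inv_pos; [nra|]. apply Rmult_lt_0_compat; [apply Rmult_lt_0_compat|]; lra. }
    assert ((3/2 - 3/Kr) / (J+1) <= (3/2 - 3/Kr) * x).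
    { unfold Rdiv. apply Rmult_le_compat_l; auto.
      apply (Rmult_le_reg_r (J+1)); [lra|]. rewrite Rinv_l; lra. }
    lra.
Qed.
Definition rr k x := w2 k x - 1 / INR k.
Definition D k j := Rmax 0 (1 / (pi_ j - 1) - 1 / INR k).

Lemma sumR_app l1 l2 : sumR (l1 ++ l2) = sumR l1 + sumR l2.
Proof. induction l1; simpl; [lra|]. unfold sumR in *. simpl. rewrite IHl1. lra. Qed.

Lemma sumR_cons a l : sumR (a :: l) = a + sumR l.
Proof. reflexivity. Qed.

Lemma sumR_mid l1 x l2 : sumR (l1 ++ x :: l2) = x + sumR (l1 ++ l2).
Proof. rewrite !sumR_app, sumR_cons. lra. Qed.

Lemma sum_le_map (f g : R -> R) L : Forall (fun x => f x <= g x) L ->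
  sumR (map f L) <= sumR (map g L).
Proof. induction 1; simpl; [lra|]. unfold sumR in *; simpl. lra. Qed.

Lemma sum_scale c L : sumR (map (fun x => c * x) L) = c * sumR L.
Proof. induction L; unfold sumR in *; simpl; [ring|]. rewrite IHL. ring. Qed.

Lemma sum_w2 k L : sumR (map (w2 k) L) = INR (length L) * (1 / INR k) + sumR (map (rr k) L).
Proof.
  induction L; [unfold sumR; simpl; lra|].
  change (length (a :: L)) with (S (length L)). rewrite S_INR.
  simpl map. rewrite !sumR_cons, IHL. unfold rr. lra.
Qed.

Lemma sum_nonneg L : Forall (fun x => 0 <= x) L -> 0 <= sumR L.
Proof. induction 1; unfold sumR in *; simpl; lra. Qed.

Lemma sumD_nonneg k l : 0 <= sumR (map (D k) l).
Proof. induction l; unfold sumR in *; simpl; [lra|]. unfold D at 1. pose proof (Rmax_l 0 (1 / (pi_ a - 1) - 1 / INR k)). lra. Qed.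

Lemma item_le_sum L x : Forall (fun y => 0 < y) L -> In x L -> x <= sumR L.
Proof.
  induction 1; [simpl; tauto|]. intros [<-|Hin].
  - pose proof (sum_nonneg l). assert (0 <= sumR l).
    { apply sum_nonneg. eapply Forall_impl; [|eassumption]. simpl; intros; lra. }
    rewrite sumR_cons. lra.
  - rewrite sumR_cons. specialize (IHForall Hin). lra.
Qed.

Lemma Forall_mid (P : R -> Prop) l1 x l2 : Forall P (l1 ++ x :: l2) -> P x /\ Forall P (l1 ++ l2).
Proof.
  intros H. rewrite Forall_app in H. destruct H as [H1 H2]. inversion H2; subst.
  split; auto. apply Forall_app; auto.
Qed.

Fixpoint sylvZ (i : nat) : Z :=
  match i with O => 2%Z | S i' => (sylvZ i' * (sylvZ i' - 1) + 1)%Z end.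

Lemma sylv_Z i : sylv0 i = IZR (sylvZ i).
Proof. induction i; simpl; [reflexivity|]. rewrite IHi, plus_IZR, mult_IZR, minus_IZR. reflexivity. Qed.

Lemma sylvZ_ge i : (Z.of_nat i + 2 <= sylvZ i)%Z.
Proof. induction i; simpl; [lia|]. nia. Qed.

Lemma sylv_ge i : INR i + 2 <= sylv0 i.
Proof. rewrite sylv_Z, INR_IZR_INZ. pose proof (sylvZ_ge i). apply IZR_le in H. rewrite plus_IZR in H. exact H. Qed.

Lemma pi_S i : pi_ (S i) = sylv0 i.
Proof. unfold pi_. rewrite Nat.sub_succ, Nat.sub_0_r. reflexivity. Qed.

Lemma invariant (f : R -> R) (a e c : R) L : 0 <= e -> 0 <= c ->
  Forall (fun x => 0 <= x /\ 0 <= f x /\ (0 < f x -> f x <= a /\ f x + e <= c * x)) L ->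
  0 <= sumR L /\
  (sumR (map f L) = 0 \/ (sumR (map f L) <= a /\ sumR (map f L) + e <= c * sumR L)
   \/ sumR (map f L) + 2 * e <= c * sumR L).
Proof.
  intros He Hc. induction 1 as [|y L [Hy [Hf Hpos]] _ [HX IH]].
  - split; [unfold sumR; simpl; lra|]. left. reflexivity.
  - simpl map. rewrite !sumR_cons. split; [lra|].
    destruct (Rlt_or_le 0 (f y)) as [Hp|Hz].
    + destruct (Hpos Hp) as [Ha Hb].
      destruct IH as [IH|[[IH1 IH2]|IH]].
      * right; left. rewrite IH. split; [lra|]. nra.
      * right; right. nra.
      * right; right. nra.
    + assert (f y = 0) by lra. rewrite H.
      destruct IH as [IH|[[IH1 IH2]|IH]].
      * left; lra.
      * right; left. split; [lra|]. nra.
      * right; right. nra.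
Qed.
Lemma Rmax_sub a c : Rmax a c - c <= Rmax 0 (a - c).
Proof. unfold Rmax; destruct Rle_dec; destruct Rle_dec; lra. Qed.

Lemma G k : (3 <= k)%nat -> forall n L i N, (length L <= n)%nat -> (1 <= i)%nat ->
  INR k <= sylv0 (i + N) - 1 -> Forall (fun x => 0 < x) L -> sumR L <= 1 / (sylv0 i - 1) ->
  sumR (map (rr k) L) <= sumR (map (D k) (seq (S i) N)).
Proof.
  intros Hk. pose proof (INRk3 k Hk) as HK.
  induction n as [|n IHn]; intros L i N Hlen Hi HN Hpos Hsum.
  { destruct L; [|simpl in Hlen; lia]. simpl map. unfold sumR at 1. simpl. apply sumD_nonneg. }
  set (p := sylv0 i) in *.
  assert (Hp3 : 3 <= p).
  { pose proof (sylv_ge i). assert (1 <= INR i) by (replace 1 with (INR 1) by reflexivity; apply le_INR; lia). unfold p; lra. }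
  set (P := sylvZ i).
  assert (EP : p = IZR P) by (unfold p, P; apply sylv_Z).
  assert (HP : (3 <= P)%Z) by (apply le_IZR; lra).
  set (u := 1 / (p - 1)) in *. set (v := 1 / p). set (w := 1 / (p * (p - 1))).
  assert (Hvu : v <= u).
  { unfold u, v. unfold Rdiv; rewrite !Rmult_1_l. apply Rinv_le_contravar; lra. }
  assert (Huvw : u - v = w) by (unfold u, v, w; field; lra).
  assert (Hu2 : u <= 1/2).
  { unfold u. unfold Rdiv; rewrite !Rmult_1_l. apply Rinv_le_contravar; lra. }
  assert (Hw0 : 0 < w) by (unfold w; apply Rdiv_lt_0_compat; nra).
  assert (Hv0 : 0 < v) by (unfold v; apply Rdiv_lt_0_compat; lra).
  assert (Hitems : forall x, In x L -> 0 < x <= u).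
  { intros x Hx. split; [rewrite Forall_forall in Hpos; auto|]. pose proof (item_le_sum L x Hpos Hx). lra. }
  assert (Kpos : 0 < 1 / INR k) by (apply Rdiv_lt_0_compat; lra).
  destruct N as [|N].
  {
    rewrite Nat.add_0_r in HN. fold p in HN.
    assert (HuK : u <= 1 / INR k).
    { unfold u. unfold Rdiv; rewrite !Rmult_1_l. apply Rinv_le_contravar; lra. }
    simpl seq. simpl map. unfold sumR at 2; simpl.
    rewrite <- (Rmult_0_l (sumR L)), <- sum_scale. apply sum_le_map.
    apply Forall_forall. intros x Hx. destruct (Hitems x Hx).
    unfold rr. rewrite w2_small; auto; lra. }
  simpl seq. simpl map. rewrite sumR_cons.
  assert (EA : D k (S i) = Rmax 0 (u - 1 / INR k)) by (unfold D; rewrite pi_S; reflexivity).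
  rewrite EA.
  destruct (classic (exists x, In x L /\ v < x)) as [[x [Hx Hxv]]|Hno].
  - destruct (in_split x L Hx) as [l1 [l2 EL]]. subst L.
    rewrite map_app. simpl map. rewrite sumR_mid.
    rewrite <- map_app.
    destruct (Hitems x Hx) as [Hx0 Hxu].
    rewrite sumR_mid in Hsum.
    apply Forall_mid in Hpos. destruct Hpos as [_ Hpos'].
    apply Rplus_le_compat.
    + unfold rr. eapply Rle_trans; [|apply Rmax_sub]. apply Rplus_le_compat_r.
      replace u with (1 / IZR (P - 1)).
      2:{ unfold u. rewrite minus_IZR, <- EP. reflexivity. }
      apply factU; auto; try lra; try lia.
      rewrite minus_IZR, <- EP. unfold u in Hxu.
      apply (Rmult_le_compat_l (p - 1)) in Hxu; [|lra].
      replace ((p - 1) * (1 / (p - 1))) with 1 in Hxu by (field; lra). lra.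
    + apply IHn.
      * rewrite length_app in *. simpl in Hlen. lia.
      * lia.
      * replace (S i + N)%nat with (i + S N)%nat by lia. exact HN.
      * exact Hpos'.
      * simpl sylv0. fold p. replace (p * (p - 1) + 1 - 1) with (p * (p - 1)) by ring.
        fold w. lra.
  - assert (Hsmall : forall x, In x L -> x <= v).
    { intros x Hx. destruct (Rle_dec x v); auto. exfalso. apply Hno. exists x. split; auto. lra. }
    set (c := (p + 1) / p).
    assert (Hc0 : 0 <= c) by (unfold c; apply Rlt_le, Rdiv_lt_0_compat; lra).
    assert (Hcu : c * u = u + w) by (unfold c, u, w; field; lra).
    destruct (invariant (rr k) (v - 1 / INR k) (1 / INR k) c L) as [HX Hinv]; try lra.
    { apply Forall_forall. intros x Hx. destruct (Hitems x Hx) as [Hx0 Hxu].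
      pose proof (Hsmall x Hx) as Hxv.
      assert (Hpx : IZR P * x <= 1).
      { rewrite <- EP. unfold v in Hxv. apply (Rmult_le_compat_l p) in Hxv; [|lra].
        replace (p * (1 / p)) with 1 in Hxv by (field; lra). lra. }
      split; [lra|]. split.
      { unfold rr. pose proof (w2_ge k x Hk Hx0 ltac:(lra)). lra. }
      intros Hr. unfold rr in Hr. split.
      - pose proof (factU k x P Hk Hx0 ltac:(lra) ltac:(lia) Hpx) as HU.
        rewrite <- EP in HU. fold v in HU. unfold rr.
        unfold Rmax in HU; destruct Rle_dec in HU; lra.
      - pose proof (factV k x P Hk Hx0 ltac:(lra) ltac:(lia) Hpx ltac:(lra)) as HV.
        rewrite <- EP in HV. unfold rr.
        assert (w2 k x <= c * x).
        { apply (Rmult_le_reg_r p); [lra|].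
          replace (c * x * p) with ((p + 1) * x) by (unfold c; field; lra). lra. }
        lra. }
    assert (HB : Rmax 0 (w - 1 / INR k) <= sumR (map (D k) (seq (S (S i)) N))).
    { destruct N as [|N].
      - simpl. unfold sumR; simpl. rewrite Rmax_left; [lra|].
        rewrite Nat.add_1_r in HN. simpl sylv0 in HN. fold p in HN.
        assert (w <= 1 / INR k).
        { unfold w. unfold Rdiv; rewrite !Rmult_1_l. apply Rinv_le_contravar; lra. }
        lra.
      - simpl seq. simpl map. rewrite sumR_cons.
        pose proof (sumD_nonneg k (seq (S (S (S i))) N)).
        assert (D k (S (S i)) = Rmax 0 (w - 1 / INR k)).
        { unfold D. rewrite pi_S. simpl sylv0. fold p. unfold w.
          replace (p * (p - 1) + 1 - 1) with (p * (p - 1)) by ring. reflexivity. }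
        lra. }
    pose proof (Rmax_l 0 (u - 1 / INR k)). pose proof (Rmax_r 0 (u - 1 / INR k)).
    pose proof (Rmax_l 0 (w - 1 / INR k)). pose proof (Rmax_r 0 (w - 1 / INR k)).
    assert (c * sumR L <= c * u) by (apply Rmult_le_compat_l; lra).
    destruct Hinv as [Hi0|[[Hi1 Hi2]|Hi3]]; lra.
Qed.
Lemma lam_gen k l : fold_right Rplus 0 (map (fun i => Rmax (1 / (pi_ i - 1)) (1 / INR k)) l)
  = INR (length l) * (1 / INR k) + sumR (map (D k) l).
Proof.
  induction l; [simpl; unfold sumR; simpl; lra|].
  change (length (a :: l)) with (S (length l)). rewrite S_INR. simpl map. simpl fold_right.
  rewrite IHl, sumR_cons. unfold D. unfold Rmax; destruct Rle_dec; destruct Rle_dec; lra.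
Qed.

Theorem lemma3 (k : nat) (I : list R) :
  (3 <= k)%nat ->
  (length I <= k)%nat ->
  Forall (fun a => 0 < a <= 1) I ->
  sumR I <= 1 ->
  sumR (map (w2 k) I) <= lambda k - 1 / INR k.
Proof.
  intros Hk Hlen Hall Hsum. pose proof (INRk3 k Hk) as HK.
  assert (Kpos : 0 < 1 / INR k) by (apply Rdiv_lt_0_compat; lra).
  assert (Kle : 1 / INR k <= 1/3) by (unfold Rdiv; rewrite !Rmult_1_l; apply Rinv_le_contravar; lra).
  assert (KK : INR k * (1 / INR k) = 1) by (field; lra).
  assert (Hpos : Forall (fun x => 0 < x) I) by (eapply Forall_impl; [|exact Hall]; simpl; intros; lra).
  assert (EL : lambda k = INR k * (1 / INR k) + sumR (map (D k) (seq 1 k))).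
  { unfold lambda. rewrite lam_gen, length_seq. reflexivity. }
  destruct k as [|[|[|k3]]]; try lia.
  assert (Eseq : seq 1 (S (S (S k3))) = 1%nat :: seq 2 (S (S k3))) by reflexivity.
  assert (Eseq2 : seq 2 (S (S k3)) = 2%nat :: seq 3 (S k3)) by reflexivity.
  assert (Ek : (1 + S (S k3))%nat = S (S (S k3))) by reflexivity.
  set (k := S (S (S k3))) in *. clearbody k.
  assert (D1 : D k 1 = 1 - 1 / INR k).
  { unfold D. change (pi_ 1) with 2. replace (1/(2-1)) with 1 by field. rewrite Rmax_right; [reflexivity|lra]. }
  rewrite Eseq, map_cons in EL. rewrite sumR_cons, D1 in EL.
  destruct (classic (exists x, In x I /\ 1/2 < x)) as [[x [Hx Hxb]]|Hno].
  - destruct (in_split x I Hx) as [l1 [l2 EI]]. subst I.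
    rewrite map_app. simpl map. rewrite sumR_mid, <- map_app.
    rewrite w2_big by lra. rewrite sum_w2.
    rewrite sumR_mid in Hsum. apply Forall_mid in Hpos. destruct Hpos as [Hx0 Hpos'].
    assert (HG : sumR (map (rr k) (l1 ++ l2)) <= sumR (map (D k) (seq 2 (S (S k3))))).
    { apply (G k Hk (length (l1 ++ l2)) (l1 ++ l2) 1 (S (S k3))); auto.
      - pose proof (sylv_ge (1 + S (S k3))). rewrite Ek in *. lra.
      - simpl sylv0. lra. }
    assert (Hl : (length (l1 ++ l2) + 1 <= k)%nat).
    { rewrite length_app in *. simpl in Hlen. lia. }
    apply le_INR in Hl. rewrite plus_INR in Hl. simpl INR in Hl at 2.
    assert (INR (length (l1 ++ l2)) * (1 / INR k) <= (INR k - 1) * (1 / INR k)).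
    { apply Rmult_le_compat_r; lra. }
    assert ((INR k - 1) * (1 / INR k) = INR k * (1 / INR k) - 1 / INR k) by ring.
    lra.
  - assert (Hsmall : Forall (fun x => 0 < x <= 1/2) I).
    { apply Forall_forall. intros x Hx. rewrite Forall_forall in Hpos. split; auto.
      destruct (Rle_dec x (1/2)); auto. exfalso. apply Hno. exists x. split; auto. lra. }
    rewrite sum_w2.
    assert (HB : sumR (map (rr k) I) <= (3/2 - 3 / INR k) * sumR I).
    { rewrite <- sum_scale. apply sum_le_map. eapply Forall_impl; [|exact Hsmall].
      intros x [Hx1 Hx2]. unfold rr. apply factB; auto. }
    assert (H3 : 0 <= 3/2 - 3 / INR k).
    { assert (3 / INR k <= 1) by (apply (Rmult_le_reg_r (INR k)); [lra|]; field_simplify; lra). lra. }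
    assert ((3/2 - 3 / INR k) * sumR I <= 3/2 - 3 / INR k) by nra.
    assert (INR (length I) * (1 / INR k) <= 1).
    { assert (INR (length I) * (1 / INR k) <= INR k * (1 / INR k)).
      { apply Rmult_le_compat_r; [lra|]. apply le_INR; auto. }
      lra. }
    rewrite Eseq2, map_cons in EL. rewrite sumR_cons in EL.
    pose proof (sumD_nonneg k (seq 3 (S k3))).
    assert (1/2 - 1 / INR k <= D k 2).
    { unfold D. change (pi_ 2) with (2 * (2 - 1) + 1). replace (2 * (2 - 1) + 1 - 1) with 2 by ring.
      apply Rmax_r. }
    lra.
Qed.
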